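(* Let $\mathcal{L}\subseteq\mathbb{S}^n$ be a regular linear subspace and let $\{A_1,\dots,A_c\}$ be a basis of $\mathcal{L}^\perp$. Then, for generic $S\in\mathbb{S}^n$, the ML degree of $\mathcal{L}$ equals the number of invertible matrices $\sum_i t_iA_i+S$ such that $(t_1,\dots,t_c)$ is a critical point of the function $\ell(t_1,\dots,t_c):=\det(\sum_i t_iA_i+S)$.
   Context: $\mathbb{S}^n$ denotes the space of complex symmetric $n\times n$ matrices. A linear subspace $\mathcal{L}$ is regular if it contains a full-rank matrix. $\mathcal{L}^\perp=\{\Sigma:\mathrm{tr}(K\Sigma)=0\ \forall K\in\mathcal{L}\}$. The reciprocal variety $\mathcal{L}^{-1}$ is the Zariski closure of the set of inverses of invertible matrices in $\mathcal{L}$. The ML degree of $\mathcal{L}$ is the number of matrices in $\mathcal{L}^{-1}\cap(\mathcal{L}^\perp+S)$ for generic $S\in\mathbb{S}^n$. *)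

(* Defs.v *)
From HB Require Import structures.
From mathcomp Require Import all_boot all_algebra.
From mathcomp Require Import reals.
From mathcomp Require Import complex.
From mathcomp Require Import mpoly.

Set Implicit Arguments.
Unset Strict Implicit.
Unset Printing Implicit Defensive.

Import GRing.Theory.
Local Open Scope ring_scope.

Section MLdegree.
Variables (R : realType) (n : nat).
Local Notation C := (R[i]).
Local Notation Mat := ('M[C]_n).

Definition mat_eval (p : {mpoly C[n * n]}) (M : Mat) : C :=
  p.@[fun k => mxvec M 0 k].

Definition zariski_closure (X : Mat -> Prop) : Mat -> Prop :=
  fun M => forall p : {mpoly C[n * n]},
    (forall Y, X Y -> mat_eval p Y = 0) -> mat_eval p M = 0.

Definition symmetric (M : Mat) : Prop := M^T = M.

Definition sym_subspace (L : {vspace Mat}) : Prop :=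
  forall K, K \in L -> symmetric K.

Definition regular (L : {vspace Mat}) : Prop :=
  exists K, K \in L /\ K \in unitmx.

Definition in_perp (L : {vspace Mat}) (X : Mat) : Prop :=
  symmetric X /\ forall K, K \in L -> \tr (K *m X) = 0.

Definition reciprocal_variety (L : {vspace Mat}) : Mat -> Prop :=
  zariski_closure (fun M => exists K, [/\ K \in L, K \in unitmx & M = invmx K]).

Definition generic (P : Mat -> Prop) : Prop :=
  exists f : {mpoly C[n * n]},
    (exists S0, symmetric S0 /\ mat_eval f S0 != 0) /\
    forall S, symmetric S -> mat_eval f S != 0 -> P S.

Definition has_card (P : Mat -> Prop) (d : nat) : Prop :=
  exists s : seq Mat, [/\ uniq s, size s = d & forall M, M \in s <-> P M].

Definition ML_degree (L : {vspace Mat}) (d : nat) : Prop :=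
  generic (fun S => has_card
    (fun M => reciprocal_variety L M /\ in_perp L (M - S)) d).

Definition perp_basis (L : {vspace Mat}) (c : nat) (A : c.-tuple Mat) : Prop :=
  free A /\ forall X, X \in <<A>>%VS <-> in_perp L X.

Definition affine_combo (c : nat) (A : c.-tuple Mat) (S : Mat) (t : 'I_c -> C)
  : Mat := \sum_(k < c) t k *: tnth A k + S.

Definition ell (c : nat) (A : c.-tuple Mat) (S : Mat) : {mpoly C[c]} :=
  \det (\matrix_(i < n, j < n)
          (\sum_(k < c) 'X_k * ((tnth A k) i j)%:MP + (S i j)%:MP)).

Definition critical_point (c : nat) (A : c.-tuple Mat) (S : Mat)
  (t : 'I_c -> C) : Prop :=
  forall k : 'I_c, (mderiv k (ell A S)).@[t] = 0.

Definition critical_matrices (c : nat) (A : c.-tuple Mat) (S : Mat) :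
  Mat -> Prop :=
  fun M => M \in unitmx /\
    exists t, M = affine_combo A S t /\ critical_point A S t.

End MLdegree.

(* Main.v *)
Require Import Defs.
From HB Require Import structures.
From mathcomp Require Import all_boot all_algebra.
From mathcomp Require Import reals.
From mathcomp Require Import complex.
From mathcomp Require Import mpoly.
From mathcomp Require Import ring.
From mathcomp Require Import zify.
Import GRing.Theory.
Import Num.Theory.

Set Implicit Arguments.
Unset Strict Implicit.
Unset Printing Implicit Defensive.

Definition encn (b k : nat) (f : nat -> nat) : nat := (\sum_(i < k) f i * b ^ i)%N.

Lemma encn_lt b k f : (forall i, (i < k)%N -> (f i < b)%N) -> (encn b k f < b ^ k)%N.
Proof.
elim: k => [|k IH] H; first by rewrite /encn big_ord0 expn0.
rewrite /encn big_ord_recr /=.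
have h1 : (encn b k f < b ^ k)%N by apply: IH => i Hi; apply: H; apply: ltnW.
have h2 : (f k < b)%N by apply: H.
rewrite expnS.
have : (f k * b ^ k + b ^ k <= b * b ^ k)%N.
  by rewrite -{2}(mul1n (b ^ k)) -mulnDl leq_mul2r addn1 h2 orbT.
move=> h3; apply: leq_trans h3.
by rewrite addnC ltn_add2l.
Qed.

Lemma encn_inj b k f g : (forall i, (i < k)%N -> (f i < b)%N) ->
  (forall i, (i < k)%N -> (g i < b)%N) ->
  encn b k f = encn b k g -> forall i, (i < k)%N -> f i = g i.
Proof.
elim: k => [|k IH] Hf Hg E i Hi; first by [].
have hf : (encn b k f < b ^ k)%N by apply: encn_lt => j Hj; apply: Hf; apply: ltnW.
have hg : (encn b k g < b ^ k)%N by apply: encn_lt => j Hj; apply: Hg; apply: ltnW.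
move: E; rewrite /encn !big_ord_recr /= -!/(encn b k _) => E.
have bk0 : (0 < b ^ k)%N by move: hf; case: (b ^ k).
have E1 : f k = g k.
  have := congr1 (fun x => x %/ b ^ k)%N E.
  by rewrite ![(encn _ _ _ + _)%N]addnC !divnMDl // !divn_small // !addn0.
have E2 : encn b k f = encn b k g.
  have := congr1 (fun x => x %% b ^ k)%N E.
  by rewrite ![(encn _ _ _ + _)%N]addnC !modnMDl !modn_small.
rewrite ltnS leq_eqVlt in Hi; case/orP: Hi => [/eqP -> //|Hi].
apply: IH => // j Hj; [apply: Hf | apply: Hg]; exact: ltnW.
Qed.



Lemma count_ineq m n :
  ((n * (m.+1 * (n * m.+1 + 1) ^ m)).+1 ^ m < ((n * m.+1 + 1) ^ m).+1 ^ m.+1)%N.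
Proof.
set c0 := (n * m.+1 + 1)%N; set T := (c0 ^ m)%N.
have H1 : ((n * (m.+1 * T)).+1 <= c0 * T.+1)%N by rewrite /c0; nia.
have H2 : ((n * (m.+1 * T)).+1 ^ m <= (c0 * T.+1) ^ m)%N.
  case: (posnP m) => [->|Hm]; first by rewrite !expn0.
  by rewrite leq_exp2r.
apply: leq_ltn_trans H2 _; rewrite expnMn -/T expnS ltn_pmul2r //.
by rewrite expn_gt0.
Qed.



Local Open Scope ring_scope.
Local Notation symm := Defs.symmetric.

Section NonRoot.
Variable F : numFieldType.

Lemma poly_nonroot (q : {poly F}) : q != 0 -> exists x, q.[x] != 0.
Proof.
move=> q0.
set rs := [seq (i%:R : F) | i <- iota 0 (size q)].
have urs : uniq rs.
  rewrite map_inj_uniq ?iota_uniq // => i j /eqP; rewrite eqr_nat => /eqP //.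
case Ha: (all (root q) rs).
  by have := max_poly_roots q0 Ha urs; rewrite size_map size_iota ltnn.
move/negbT: Ha => /allPn [x _ Hx]; exists x; exact: Hx.
Qed.

Lemma mpoly_nonroot k (p : {mpoly F[k]}) : p != 0 -> exists v : 'I_k -> F, p.@[v] != 0.
Proof.
move=> p0.
set b := msize p.
have lt_b : forall m, m \in msupp p -> forall i : 'I_k, (m i < b)%N.
  move=> m /msize_mdeg_lt H i; apply: leq_ltn_trans H.
  by rewrite mdegE (bigD1 i) //= leq_addr.
pose enc (m : 'X_{1..k}) := encn b k (nth 0%N m).
have encE : forall m : 'X_{1..k}, enc m = (\sum_(i < k) m i * b ^ i)%N.
  move=> m; rewrite /enc /encn; apply: eq_bigr => i _.
  by rewrite mnm_tnth (tnth_nth 0%N).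
have enc_inj : {in msupp p &, injective enc}.
  move=> m1 m2 H1 H2 E; apply/mnmP => i.
  have := @encn_inj b k (nth 0%N m1) (nth 0%N m2) _ _ E i (ltn_ord i).
  rewrite !mnm_tnth !(tnth_nth 0%N); apply.
  - move=> j Hj; have := lt_b _ H1 (Ordinal Hj); by rewrite mnm_tnth (tnth_nth 0%N).
  - move=> j Hj; have := lt_b _ H2 (Ordinal Hj); by rewrite mnm_tnth (tnth_nth 0%N).
pose q : {poly F} := \sum_(m <- msupp p) p@_m *: 'X^(enc m).
have m0s := mlead_supp p0.
have q0 : q != 0.
  apply/eqP => /(congr1 (fun r : {poly F} => r`_(enc (mlead p)))).
  rewrite coef0 /q coef_sum (bigD1_seq (mlead p)) ?msupp_uniq //=.
  rewrite coefZ coefXn eqxx mulr1 big1_seq ?addr0.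
    by move/eqP; rewrite mcoeff_eq0 m0s.
  move=> m /andP [ne Hm]; rewrite coefZ coefXn.
  case: eqP => [E|]; last by rewrite mulr0.
  by move: ne; rewrite (enc_inj _ _ m0s Hm E) eqxx.
have [x Hx] := poly_nonroot q0.
exists (fun i => x ^+ (b ^ i)); move: Hx.
rewrite mevalE /q horner_sum; congr (_ != _); apply: eq_bigr => m _.
rewrite hornerZ hornerXn; congr (_ * _).
rewrite encE -prodrXr; apply: eq_bigr => i _.
by rewrite -exprM mulnC.
Qed.

End NonRoot.

Section Gen.
Variables (R : realType) (n : nat).
Local Notation C := (R[i]).
Local Notation Mat := ('M[C]_n).
Local Notation MP := ({mpoly C[n * n]}).

Definition Xmat : 'M[MP]_n := \matrix_(i, j) 'X_(mxvec_index i j).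

Lemma map_Xmat (M : Mat) : map_mx (meval (fun k => mxvec M 0 k)) Xmat = M.
Proof. by apply/matrixP => i j; rewrite !mxE mevalXU mxvecE. Qed.

Lemma symP (M : Mat) : symm M -> forall i j, M i j = M j i.
Proof. by move=> H i j; rewrite -{1}H mxE. Qed.

Definition Wv (v : 'I_(n * n) -> C) : Mat := \matrix_(i, j) v (mxvec_index i j).
Definition symtuple : (n * n).-tuple MP :=
  [tuple mxvec (Xmat + Xmat^T) 0 k | k < n * n].

Lemma symtupleE (g : MP) v :
  (g \mPo symtuple).@[v] = mat_eval g (Wv v + (Wv v)^T).
Proof.
rewrite comp_mpoly_meval /mat_eval; apply: meval_eq => k.
rewrite tnth_mktuple; case/mxvec_indexP: k => i j.
by rewrite !mxvecE !mxE mevalD !mevalXU.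
Qed.

Lemma sym_half (S : Mat) : symm S ->
  Wv (fun k => mxvec S 0 k / 2) + (Wv (fun k => mxvec S 0 k / 2))^T = S.
Proof.
move=> HS; apply/matrixP => i j; rewrite !mxE !mxvecE (symP HS j i).
by rewrite -splitr.
Qed.

Lemma Wv_sym v : symm (Wv v + (Wv v)^T).
Proof. by rewrite /Defs.symmetric linearD /= trmxK addrC. Qed.

Lemma generic_and (P Q : Mat -> Prop) :
  generic P -> generic Q -> generic (fun S => P S /\ Q S).
Proof.
move=> [f [[S1 [HS1 Hf1]] HP]] [g [[S2 [HS2 Hg2]] HQ]].
exists (f * g); split; last first.
  move=> S HS; rewrite /mat_eval mevalM mulf_eq0 negb_or => /andP [h1 h2].
  by split; [apply: HP | apply: HQ].
have nf : f \mPo symtuple != 0.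
  apply/eqP => E; move: Hf1; rewrite -(sym_half HS1) -symtupleE E meval0 eqxx //.
have ng : g \mPo symtuple != 0.
  apply/eqP => E; move: Hg2; rewrite -(sym_half HS2) -symtupleE E meval0 eqxx //.
have [v Hv] := mpoly_nonroot (mulf_neq0 nf ng).
exists (Wv v + (Wv v)^T); split; first exact: Wv_sym.
by move: Hv; rewrite mevalM !symtupleE /mat_eval mevalM.
Qed.

Lemma generic_mono (P Q : Mat -> Prop) :
  (forall S, symm S -> P S -> Q S) -> generic P -> generic Q.
Proof.
move=> H [f [ex HP]]; exists f; split => // S HS Hf; apply: H => //; exact: HP.
Qed.

End Gen.

Section Lin.
Variables (R : realType) (n : nat).
Local Notation C := (R[i]).
Local Notation Mat := ('M[C]_n).
Local Notation MP := ({mpoly C[n * n]}).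

Definition islin (psi : Mat -> C) := forall a X Y, psi (a *: X + Y) = a * psi X + psi Y.

Lemma islin0 psi : islin psi -> psi 0 = 0.
Proof.
move=> H; have := H 1 0 0; rewrite scale1r addr0 mul1r.
by rewrite -{1}[psi 0]addr0 => /addrI <-.
Qed.

Lemma islinD psi : islin psi -> forall X Y, psi (X + Y) = psi X + psi Y.
Proof. by move=> H X Y; rewrite -{1}[X]scale1r H mul1r. Qed.

Lemma islinZ psi : islin psi -> forall a X, psi (a *: X) = a * psi X.
Proof. by move=> H a X; rewrite -[a *: X]addr0 H islin0 // addr0. Qed.

Lemma islin_sum psi I (r : seq I) (F : I -> Mat) : islin psi ->
  psi (\sum_(i <- r) F i) = \sum_(i <- r) psi (F i).
Proof.
move=> H; elim: r => [|x r IH]; first by rewrite !big_nil islin0.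
by rewrite !big_cons islinD // IH.
Qed.

Lemma psi_expand psi : islin psi -> forall K : Mat,
  psi K = \sum_a \sum_b K a b * psi (delta_mx a b).
Proof.
move=> H K; rewrite {1}[K]matrix_sum_delta islin_sum //; apply: eq_bigr => a _.
by rewrite islin_sum //; apply: eq_bigr => b _; rewrite islinZ.
Qed.

Definition symrep (psi : Mat -> C) : Mat :=
  \matrix_(a, b) ((psi (delta_mx a b) + psi (delta_mx b a)) / 2).

Lemma symrep_sym psi : symm (symrep psi).
Proof. by apply/matrixP => a b; rewrite !mxE addrC. Qed.

Lemma symrep_tr psi : islin psi -> forall K, symm K -> \tr (K *m symrep psi) = psi K.
Proof.
move=> H K HK; rewrite /mxtrace.
under eq_bigr do rewrite mxE.
under eq_bigr do under eq_bigr do rewrite mxE.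
have E : \sum_a \sum_b K a b * psi (delta_mx b a) = psi K.
  rewrite (psi_expand H) exchange_big /=; apply: eq_bigr => a _; apply: eq_bigr => b _.
  by rewrite (symP HK).
rewrite [RHS](splitr (psi K)) -{1}E {1}(psi_expand H) !mulr_suml -big_split /=.
apply: eq_bigr => a _; rewrite !mulr_suml -big_split /=; apply: eq_bigr => b _.
ring.
Qed.

Lemma sym_rep psi : islin psi -> exists X : Mat, symm X /\
  forall K, symm K -> \tr (K *m X) = psi K.
Proof.
by move=> H; exists (symrep psi); split; [exact: symrep_sym | exact: symrep_tr].
Qed.

Lemma proj_functional (L : {vspace Mat}) (Y : Mat) : Y \notin L ->
  exists psi, [/\ islin psi, (forall K, K \in L -> psi K = 0) & psi Y != 0].
Proof.
move=> HY.
set Z := Y - projv L Y.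
case: (pickP (fun p : 'I_n * 'I_n => Z p.1 p.2 != 0)) => [[a b] /= Hab | H]; last first.
  have Z0 : Z = 0.
    apply/matrixP => a b; rewrite [RHS]mxE; apply/eqP; exact: (negbFE (H (a, b))).
  by move: HY; have := memv_proj L Y; move/eqP: Z0; rewrite subr_eq0 => /eqP <- ->.
exists (fun X => (X - projv L X) a b); split.
- by move=> c X W; rewrite linearD linearZ /= !mxE; ring.
- by move=> K HK; rewrite projv_id // subrr mxE.
- exact: Hab.
Qed.

Lemma sub_closure (P : Mat -> Prop) M : P M -> zariski_closure P M.
Proof. by move=> HM p Hp; apply: Hp. Qed.

Lemma perp_perp (L : {vspace Mat}) c (A : c.-tuple Mat) :
  sym_subspace L -> perp_basis L A -> forall Y : Mat, symm Y ->
  (forall k, \tr (Y *m tnth A k) = 0) -> Y \in L.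
Proof.
move=> HL [_ HA] Y HY Hk.
case: (boolP (Y \in L)) => // /proj_functional [psi [Hpsi H0 HY0]].
have [X [HX HXK]] := sym_rep Hpsi.
have HXp : in_perp L X.
  split => // K HK; rewrite HXK; [exact: H0 | exact: HL].
have /coord_span E := (proj2 (HA X) HXp).
move: HY0; rewrite -HXK // E mulmx_sumr raddf_sum /= big1 ?eqxx //.
move=> k _; rewrite -scalemxAr linearZ /=.
by have := Hk k; rewrite (tnth_nth 0) => ->; rewrite mulr0.
Qed.

Lemma adj_inv (N : Mat) : N \in unitmx -> \adj N = \det N *: invmx N.
Proof.
move=> HN; rewrite /invmx HN scalerA mulfV ?scale1r //.
Qed.

Definition adjpoly (psi : Mat -> C) : MP :=
  \sum_a \sum_b (psi (delta_mx a b))%:MP * (\adj (Xmat R n)) a b.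

Lemma adjpolyE psi N : islin psi -> mat_eval (adjpoly psi) N = psi (\adj N).
Proof.
move=> H; rewrite (psi_expand H) /mat_eval /adjpoly raddf_sum /=.
apply: eq_bigr => a _; rewrite raddf_sum /=; apply: eq_bigr => b _.
rewrite mevalM mevalC mulrC; congr (_ * _).
by rewrite -[X in _ = (\adj X) a b](map_Xmat N) -map_mx_adj [RHS]mxE.
Qed.

Lemma closure_inv (L : {vspace Mat}) M : reciprocal_variety L M ->
  M \in unitmx -> invmx M \in L.
Proof.
move=> HM HU.
case: (boolP (invmx M \in L)) => // /proj_functional [psi [Hpsi H0 HY0]].
have := HM (adjpoly psi).
rewrite adjpolyE // adj_inv // islinZ // => H.
suff : \det M * psi (invmx M) = 0.
  move/eqP; rewrite mulf_eq0 (negbTE HY0) orbF => /eqP D0.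
  by move: HU; rewrite unitmxE unitfE D0 eqxx.
apply: H => Y [K [HK HKu ->]].
rewrite adjpolyE // adj_inv ?unitmx_inv // invmxK islinZ // H0 // mulr0 //.
Qed.
End Lin.

Section Jac.
Variables (F : fieldType) (c : nat).
Local Notation P := ({mpoly F[c]}).

Lemma deriv_prod (k : 'I_c) m (f : 'I_m -> P) :
  mderiv k (\prod_(i < m) f i) =
  \sum_(a < m) \prod_(i < m) (if i == a then mderiv k (f i) else f i).
Proof.
elim: m f => [|m IH] f.
  by rewrite big_ord0 big_ord0 -[1]/(1%:MP) mderivC.
rewrite big_ord_recr /= mderivM IH big_ord_recr /= mulr_suml; congr (_ + _).
  apply: eq_bigr => a _; rewrite big_ord_recr /=.
  have -> : (ord_max == widen_ord (leqnSn m) a) = false.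
    by apply/negbTE; rewrite neq_ltn /= ltn_ord orbT.
  by congr (_ * _); apply: eq_bigr => i _.
rewrite [RHS]big_ord_recr /= eqxx; congr (_ * _); apply: eq_bigr => i _.
have -> : (widen_ord (leqnSn m) i == ord_max) = false.
  by apply/negbTE; rewrite neq_ltn /= ltn_ord.
by [].
Qed.

Lemma deriv_det (k : 'I_c) m (Q : 'M[P]_m) :
  mderiv k (\det Q) =
  \sum_(a < m) \det (\matrix_(i, j) if i == a then mderiv k (Q i j) else Q i j).
Proof.
rewrite /determinant raddf_sum /= exchange_big /=; apply: eq_bigr => s _.
rewrite mderivM -mulr_sumr deriv_prod.
have -> : mderiv k ((-1) ^+ perm.odd_perm s : P) = 0.
  by case: (perm.odd_perm s); rewrite /= ?expr1 ?expr0 ?mderivN -[1]/(1%:MP) mderivC ?oppr0.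
rewrite mul0r add0r; congr (_ * _); apply: eq_bigr => a _.
by apply: eq_bigr => i _; rewrite mxE.
Qed.
End Jac.

Section Jac2.
Variables (R : realType) (n c : nat) (A : c.-tuple 'M[R[i]]_n) (S : 'M[R[i]]_n).
Local Notation C := (R[i]).
Local Notation Mat := ('M[C]_n).

Definition Pm : 'M[{mpoly C[c]}]_n :=
  \matrix_(i < n, j < n) (\sum_(k < c) 'X_k * ((tnth A k) i j)%:MP + (S i j)%:MP).

Lemma ellE : ell A S = \det Pm.
Proof. by []. Qed.

Lemma Pm_eval t : map_mx (meval t) Pm = affine_combo A S t.
Proof.
apply/matrixP => i j; rewrite !mxE mevalD mevalC raddf_sum /= summxE.
congr (_ + _); apply: eq_bigr => k _.
by rewrite mevalM mevalXU mevalC !mxE.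
Qed.

Lemma mderivXU (k l : 'I_c) : mderiv k ('X_l : {mpoly C[c]}) = (l == k)%:R.
Proof.
rewrite mderivX mnm1E; case: eqP => [->|_]; last by rewrite scale0r.
have -> : (U_(k) - U_(k))%MM = 0%MM by apply/mnmP => x; rewrite mnmBE subnn mnm0E.
by rewrite mpolyX0 scale1r.
Qed.

Lemma Pm_deriv k i j : mderiv k (Pm i j) = ((tnth A k) i j)%:MP.
Proof.
rewrite mxE mderivD mderivC addr0 raddf_sum /=.
rewrite (bigD1 k) //= big1 ?addr0.
  by rewrite mderivM mderivC mulr0 addr0 mderivXU eqxx mul1r.
move=> l Hl; rewrite mderivM mderivC mulr0 addr0 mderivXU.
by rewrite (negbTE Hl) mul0r.
Qed.

Lemma jacobi k t :
  (mderiv k (ell A S)).@[t] = \tr (tnth A k *m \adj (affine_combo A S t)).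
Proof.
rewrite ellE deriv_det raddf_sum /=.
rewrite /mxtrace; apply: eq_bigr => a _.
rewrite -det_map_mx (expand_det_row _ a) mxE; apply: eq_bigr => b _.
rewrite [X in X * _]mxE [X in _ X * _]mxE eqxx Pm_deriv [in RHS]mxE /= mevalC.
congr (_ * _); rewrite /cofactor; congr (_ * _); apply: congr1.
apply/matrixP => i j; rewrite !mxE.
have -> : (lift a i == a) = false by apply/negbTE; rewrite eq_sym; exact: neq_lift.
by have /matrixP/(_ (lift a i) (lift b j)) := Pm_eval t; rewrite !mxE.
Qed.
End Jac2.
Section Dle.
Variables (F : fieldType) (m : nat).
Local Notation P := ({mpoly F[m]}).

Definition dle (d : nat) (p : P) := forall mm : 'X_{1..m}, (d < mdeg mm)%N -> p@_mm = 0.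

Lemma dle_weak d d' p : (d <= d')%N -> dle d p -> dle d' p.
Proof. by move=> H Hp mm Hm; apply: Hp; apply: leq_ltn_trans Hm. Qed.

Lemma dleD d p q : dle d p -> dle d q -> dle d (p + q).
Proof. by move=> Hp Hq mm Hm; rewrite mcoeffD Hp ?Hq ?addr0. Qed.

Lemma dle0 d : dle d 0.
Proof. by move=> mm _; rewrite mcoeff0. Qed.

Lemma dle_sum d I (r : seq I) (Q : pred I) (f : I -> P) :
  (forall i, Q i -> dle d (f i)) -> dle d (\sum_(i <- r | Q i) f i).
Proof.
move=> H; elim/big_rec: _ => [|i x Qi Hx]; first exact: dle0.
by apply: dleD => //; apply: H.
Qed.

Lemma dleZ d a p : dle d p -> dle d (a *: p).
Proof. by move=> Hp mm Hm; rewrite mcoeffZ Hp ?mulr0. Qed.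

Lemma dleC a : dle 0 a%:MP.
Proof.
move=> mm Hm; rewrite mcoeffC; case: eqP => [E|]; last by rewrite mulr0.
by move: Hm; rewrite E mdeg0.
Qed.

Lemma dle1 : dle 0 1.
Proof.
move=> mm Hm; rewrite mcoeff1; case: eqP => [E|]; last by [].
by move: Hm; rewrite E mdeg0.
Qed.

Lemma dleX (j : 'I_m) : dle 1 'X_j.
Proof.
move=> mm Hm; rewrite mcoeffX; case: eqP => [E|//].
by move: Hm; rewrite -E mdeg1.
Qed.

Lemma dleM d1 d2 p q : dle d1 p -> dle d2 q -> dle (d1 + d2) (p * q).
Proof.
move=> Hp Hq mm Hm; rewrite mcoeffM big1 // => k /eqP E.
have {}Hm : (d1 + d2 < mdeg k.1 + mdeg k.2)%N by rewrite -mdegD -E.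
move: Hm => H.
case: (ltnP d1 (mdeg k.1)) => [H1|H1]; first by rewrite Hp ?mul0r.
rewrite Hq ?mulr0 // -(ltn_add2l d1); apply: (leq_trans H); rewrite leq_add2r. exact: H1.
Qed.

Lemma dle_prod I (r : seq I) (Q : pred I) (f : I -> P) (d : I -> nat) :
  (forall i, Q i -> dle (d i) (f i)) ->
  dle (\sum_(i <- r | Q i) d i) (\prod_(i <- r | Q i) f i).
Proof.
move=> H; elim/big_rec2: _ => [|i x y Qi Hy]; first exact dle1.
by apply: dleM => //; apply: H.
Qed.

Lemma dleX_exp d e p : dle d p -> dle (d * e) (p ^+ e).
Proof.
move=> Hp; elim: e => [|e IH]; first by rewrite expr0 muln0; exact dle1.
by rewrite exprS mulnS; apply: dleM.
Qed.

Lemma dle_det k (Q : 'M[P]_k) : (forall i j, dle 1 (Q i j)) -> dle k (\det Q).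
Proof.
move=> H; rewrite /determinant; apply: dle_sum => s _.
apply (@dle_weak (0 + k)%N) => //; apply: dleM.
  case: (perm.odd_perm s); rewrite /= ?expr1 ?expr0 ?rmorphN.
    by move=> mm Hm; rewrite mcoeffN mcoeff1; case: eqP => [E|]; [move: Hm; rewrite E mdeg0 | rewrite oppr0].
  exact dle1.
apply (@dle_weak (\sum_(i < k) 1)%N); first by rewrite sum1_card card_ord.
by apply: dle_prod => i _; apply: H.
Qed.

End Dle.

Section AlgDep.
Variables (F : fieldType) (m : nat).
Local Notation P := ({mpoly F[m]}).

Lemma alg_dep (n : nat) (G : 'I_m -> P) (D : P) :
  dle n D -> (forall i, dle n (G i)) ->
  exists T : nat, exists w : ({ffun 'I_m -> 'I_T.+1} * 'I_T.+1)%type -> F,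
    (exists d, w d != 0) /\
    \sum_d w d *: ((\prod_i G i ^+ d.1 i) * D ^+ (m.+1 * T - \sum_i d.1 i - d.2)%N) = 0.
Proof.
move=> HD HG.
set T := ((n * m.+1 + 1) ^ m)%N; exists T.
set N := (m.+1 * T)%N; set E := (n * N)%N.
pose Dom : finType := ({ffun 'I_m -> 'I_T.+1} * 'I_T.+1)%type.
pose Tgt := {ffun 'I_m -> 'I_E.+1}.
pose term (d : Dom) : P := (\prod_i G i ^+ d.1 i) * D ^+ (N - \sum_i d.1 i - d.2)%N.
have Hdeg : forall d, dle E (term d).
  move=> d; set s := (\sum_i (d.1 i : nat))%N.
  have Hs : (s <= N)%N.
    apply: (@leq_trans (\sum_(i < m) T)%N); first by apply: leq_sum => i _; rewrite -ltnS.
    rewrite sum_nat_const card_ord /N; nia.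
  apply (@dle_weak _ _ (n * s + n * (N - s - d.2))%N).
    rewrite /E; nia.
  rewrite /term; apply dleM; last exact (dleX_exp (e := (N - s - d.2)%N) HD).
  rewrite /s big_distrr /=; apply dle_prod => i _; exact (dleX_exp (e := d.1 i) (HG i)).
pose mono (mu : Tgt) : 'X_{1..m} := [multinom (mu i : nat) | i < m].
pose Mx : 'M[F]_(#|Dom|, #|Tgt|) :=
  \matrix_(x, y) (term (enum_val x))@_(mono (enum_val y)).
have card_ineq : (#|Tgt| < #|Dom|)%N.
  rewrite /Dom /Tgt card_prod !card_ffun !card_ord -expnSr.
  exact: count_ineq.
have rk : (\rank Mx < #|Dom|)%N by apply: leq_ltn_trans (rank_leq_col Mx) card_ineq.
have Ker0 : kermx Mx != 0 by rewrite kermx_eq0 /row_free neq_ltn rk.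
have [r Hr] : exists r, row r (kermx Mx) != 0.
  case: (pickP (fun r => row r (kermx Mx) != 0)) => [r Hr|H]; first by exists r.
  move: Ker0; suff -> : kermx Mx = 0 by rewrite eqxx.
  by apply/row_matrixP => r; rewrite row0; apply/eqP; exact: (negbFE (H r)).
set v := row r (kermx Mx).
have vM : v *m Mx = 0 by rewrite /v -row_mul mulmx_ker row0.
exists (fun d => v 0 (enum_rank d)); split.
  case: (pickP (fun x => v 0 x != 0)) => [x Hx|H].
    by exists (enum_val x); rewrite enum_valK.
  move: Hr; rewrite -/v; suff -> : v = 0 by rewrite eqxx.
  apply/matrixP => i j; rewrite (ord1 i) [RHS]mxE; apply/eqP; exact: (negbFE (H j)).
apply/mpolyP => mm; rewrite mcoeff0 raddf_sum /=.
under eq_bigr do rewrite mcoeffZ.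
case: (boolP [forall i, (mm i <= E)%N]) => Hall.
  pose mu : Tgt := [ffun i => inord (mm i)].
  have Emono : mono mu = mm.
    apply/mnmP => i; rewrite mnmE ffunE inordK //.
    by rewrite ltnS; exact: (forallP Hall i).
  transitivity ((v *m Mx) 0 (enum_rank mu)); last by rewrite vM mxE.
  rewrite [RHS]mxE (reindex (@enum_val Dom Dom)) /=; last exact: onW_bij (enum_val_bij _).
  apply: eq_bigr => x _; rewrite enum_valK; congr (_ * _); rewrite /Mx mxE enum_rankK Emono //.
move/forallPn: Hall => [i Hi].
rewrite big1 // => d _; rewrite Hdeg ?mulr0 //.
rewrite -ltnNge in Hi; apply: leq_trans Hi _.
by rewrite mdegE (bigD1 i) //= leq_addr.
Qed.
End AlgDep.

Section NonSing.
Variables (R : realType) (n : nat) (L : {vspace 'M[R[i]]_n}).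
Local Notation C := (R[i]).
Local Notation Mat := ('M[C]_n).
Local Notation MP := ({mpoly C[n * n]}).
Local Notation m := (\dim L).
Local Notation B := (vbasis L).
Local Notation U := ({mpoly C[m]}).

Definition Km : 'M[U]_n := \matrix_(a, b) \sum_(j < m) 'X_j * ((tnth B j) a b)%:MP.
Definition Dp : U := \det Km.
Definition Gp (i : 'I_m) : U := \sum_a \sum_b ((tnth B i) a b)%:MP * (\adj Km) b a.

Lemma tr_expand k (X Y : 'M[C]_k) : \tr (X *m Y) = \sum_a \sum_b X a b * Y b a.
Proof. by rewrite /mxtrace; apply: eq_bigr => a _; rewrite mxE. Qed.

Lemma Km_eval u : map_mx (meval u) Km = \sum_j u j *: tnth B j.
Proof.
apply/matrixP => a b; rewrite !mxE raddf_sum summxE /=; apply: eq_bigr => j _.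
by rewrite mevalM mevalXU mevalC !mxE.
Qed.

Lemma Dp_eval u : meval u Dp = \det (\sum_j u j *: tnth B j).
Proof. by rewrite -Km_eval det_map_mx. Qed.

Lemma Gp_eval u i : meval u (Gp i) = \tr (tnth B i *m \adj (\sum_j u j *: tnth B j)).
Proof.
rewrite tr_expand raddf_sum /=; apply: eq_bigr => a _; rewrite raddf_sum /=.
apply: eq_bigr => b _; rewrite mevalM mevalC; congr (_ * _).
by rewrite -Km_eval -map_mx_adj [RHS]mxE.
Qed.

Lemma dleN d (p : U) : dle d p -> dle d (- p).
Proof. by move=> H mm Hm; rewrite mcoeffN H ?oppr0. Qed.

Lemma dle_sign e : dle 0 ((-1) ^+ e : U).
Proof.
have H : dle 0 (-1 : U) by apply: dleN; exact: dle1.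
rewrite -(mul0n e); exact (dleX_exp (e := e) H).
Qed.

Lemma dle_Km a b : dle 1 (Km a b).
Proof.
rewrite mxE; apply dle_sum => j _.
apply (@dle_weak _ _ (1 + 0)%N) => //; apply dleM; [exact: dleX | exact: dleC].
Qed.

Lemma dle_Dp : dle n Dp.
Proof. apply: dle_det => a b; exact: dle_Km. Qed.

Lemma dle_Gp i : dle n (Gp i).
Proof.
apply dle_sum => a _; apply dle_sum => b _.
apply (@dle_weak _ _ (0 + (0 + n.-1))%N); first by rewrite !add0n leq_pred.
apply dleM; first exact: dleC.
rewrite mxE /cofactor; apply dleM; first exact: dle_sign.
apply: dle_det => x y; have := dle_Km (lift a x) (lift b y); by rewrite !mxE.
Qed.


Lemma rel_at T (w : ({ffun 'I_m -> 'I_T.+1} * 'I_T.+1)%type -> C) :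
  \sum_d w d *: ((\prod_i Gp i ^+ d.1 i) * Dp ^+ (m.+1 * T - \sum_i d.1 i - d.2)%N) = 0 ->
  forall K, K \in L -> K \in unitmx ->
  \sum_d w d * ((\prod_i (\tr (tnth B i *m invmx K)) ^+ d.1 i) * (\det (invmx K)) ^+ d.2) = 0.
Proof.
move=> Hrel K HK HU.
pose u := fun j => coord B j K.
have EK : \sum_j u j *: tnth B j = K.
  rewrite [RHS](coord_vbasis HK); apply: eq_bigr => j _; by rewrite (tnth_nth 0).
set dl := \det K.
have dl0 : dl != 0 by move: HU; rewrite unitmxE unitfE.
pose y i := \tr (tnth B i *m invmx K).
have Gy : forall i, meval u (Gp i) = dl * y i.
  by move=> i; rewrite Gp_eval EK adj_inv // -scalemxAr linearZ.
have Dy : meval u Dp = dl by rewrite Dp_eval EK.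
set N := (m.+1 * T)%N.
have term : forall d : ({ffun 'I_m -> 'I_T.+1} * 'I_T.+1)%type,
    meval u ((\prod_i Gp i ^+ d.1 i) * Dp ^+ (N - \sum_i d.1 i - d.2)%N) =
    dl ^+ N * ((\prod_i y i ^+ d.1 i) * (\det (invmx K)) ^+ d.2).
  move=> d; set s := (\sum_i (d.1 i : nat))%N.
  have Hs : (s + d.2 <= N)%N.
    have : (s <= \sum_(i < m) T)%N by apply: leq_sum => i _; rewrite -ltnS.
    rewrite sum_nat_const card_ord /N => H1.
    have := ltn_ord d.2; nia.
  rewrite mevalM rmorph_prod /= rmorphXn /= Dy.
  under eq_bigr do rewrite rmorphXn /= Gy exprMn.
  rewrite big_split /= prodrXr -/s det_inv exprVn.
  rewrite -/dl mulrAC -exprD.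
  have -> : (s + (N - s - d.2) = N - d.2)%N by lia.
  rewrite exprB ?unitfE //; first by rewrite mulrAC mulrA.
  lia.
have := congr1 (meval u) Hrel; rewrite meval0 raddf_sum /=.
under eq_bigr do rewrite mevalZ term mulrCA.
rewrite -mulr_sumr => /eqP; rewrite mulf_eq0 expf_eq0 (negbTE dl0) andbF /= => /eqP.
by [].
Qed.


Definition piP (i : 'I_m) : MP := \sum_a \sum_b ((tnth B i) a b)%:MP * (Xmat R n) b a.
Definition detP : MP := \det (Xmat R n).

Lemma piP_eval i M : mat_eval (piP i) M = \tr (tnth B i *m M).
Proof.
rewrite tr_expand /mat_eval raddf_sum /=; apply: eq_bigr => a _; rewrite raddf_sum /=.
apply: eq_bigr => b _; rewrite mevalM mevalC mxE mevalXU mxvecE //.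
Qed.

Lemma detP_eval M : mat_eval detP M = \det M.
Proof. by rewrite /mat_eval /detP -det_map_mx map_Xmat. Qed.

Lemma generic_nonsing : sym_subspace L ->
  generic (fun S => forall M, reciprocal_variety L M -> in_perp L (M - S) -> M \in unitmx).
Proof.
move=> HL.
have [T [w [[d0 Hd0] Hrel]]] := alg_dep dle_Dp dle_Gp.
have Hrat := rel_at Hrel.
pose Pk k := (k < T.+1)%N && [exists a : {ffun 'I_m -> 'I_T.+1}, w (a, inord k) != 0].
have exP : exists k, Pk k.
  exists (d0.2 : nat); rewrite /Pk ltn_ord /=; apply/existsP; exists d0.1.
  by rewrite inord_val; case: d0 Hd0.
case: (ex_minnP exP) => j /andP [Hj /existsP [a0 Ha0]] Hmin.
have wlow : forall d : ({ffun 'I_m -> 'I_T.+1} * 'I_T.+1)%type, (d.2 < j)%N -> w d = 0.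
  move=> d Hd; apply/eqP; apply/negPn/negP => Hw.
  have : Pk d.2.
    rewrite /Pk ltn_ord /=; apply/existsP; exists d.1; rewrite inord_val.
    by case: d Hw Hd.
  by move/Hmin; rewrite leqNgt Hd.
pose Rj : MP := \sum_(d : ({ffun 'I_m -> 'I_T.+1} * 'I_T.+1)%type | (j <= d.2)%N) w d *: ((\prod_i piP i ^+ d.1 i) * detP ^+ (d.2 - j)).
pose h : MP := \sum_(d : ({ffun 'I_m -> 'I_T.+1} * 'I_T.+1)%type | (j <= d.2)%N) w d *: ((\prod_i piP i ^+ d.1 i) * 0 ^+ (d.2 - j)).
have Rj_eval : forall M, mat_eval Rj M = \sum_(d : ({ffun 'I_m -> 'I_T.+1} * 'I_T.+1)%type | (j <= d.2)%N)
    w d * ((\prod_i (\tr (tnth B i *m M)) ^+ d.1 i) * (\det M) ^+ (d.2 - j)).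
  move=> M; rewrite /mat_eval raddf_sum /=; apply: eq_bigr => d _.
  rewrite mevalZ mevalM rmorph_prod /= rmorphXn /= -/(mat_eval detP M) detP_eval.
  congr (_ * (_ * _)); apply: eq_bigr => i _.
  by rewrite rmorphXn /= -/(mat_eval (piP i) M) piP_eval.
have h_eval : forall M, mat_eval h M = \sum_(d : ({ffun 'I_m -> 'I_T.+1} * 'I_T.+1)%type | (j <= d.2)%N)
    w d * ((\prod_i (\tr (tnth B i *m M)) ^+ d.1 i) * 0 ^+ (d.2 - j)).
  move=> M; rewrite /mat_eval raddf_sum /=; apply: eq_bigr => d _.
  rewrite mevalZ mevalM rmorph_prod /= rmorphXn /= meval0.
  congr (_ * (_ * _)); apply: eq_bigr => i _.
  by rewrite rmorphXn /= -/(mat_eval (piP i) M) piP_eval.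
have Claim1 : forall M, reciprocal_variety L M -> mat_eval Rj M = 0.
  move=> M HM; apply: HM => Y [K [HK HU ->]].
  rewrite Rj_eval.
  have := Hrat K HK HU; set z := \det (invmx K).
  have z0 : z != 0 by rewrite /z det_inv invr_eq0 -unitfE -unitmxE.
  rewrite (bigID (fun d : ({ffun 'I_m -> 'I_T.+1} * 'I_T.+1)%type => (j <= d.2)%N)) /= [X in _ + X]big1 ?addr0; last first.
    by move=> d; rewrite -ltnNge => /wlow ->; rewrite mul0r.
  have -> : \sum_(d : ({ffun 'I_m -> 'I_T.+1} * 'I_T.+1)%type | (j <= d.2)%N) w d * (\prod_i \tr (tnth B i *m invmx K) ^+ d.1 i * z ^+ d.2)
    = z ^+ j * \sum_(d : ({ffun 'I_m -> 'I_T.+1} * 'I_T.+1)%type | (j <= d.2)%N) w d * (\prod_i \tr (tnth B i *m invmx K) ^+ d.1 i * z ^+ (d.2 - j)).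
    rewrite mulr_sumr; apply: eq_bigr => d Hd.
    have -> : z ^+ d.2 = z ^+ j * z ^+ (d.2 - j) by rewrite -exprD subnKC.
    set P := \prod_i _; set zj := z ^+ j; set ze := z ^+ _; rewrite [P * _]mulrCA [w d * (zj * _)]mulrCA; reflexivity.
  by move/eqP; rewrite mulf_eq0 expf_eq0 (negbTE z0) andbF /= => /eqP.
have Claim2 : forall M, \det M = 0 -> mat_eval Rj M = mat_eval h M.
  move=> M D0; apply: etrans (Rj_eval M) _; rewrite D0; exact: esym (h_eval M).
have Claim3 : forall M S, in_perp L (M - S) -> mat_eval h M = mat_eval h S.
  move=> M S [_ Hp]; rewrite (h_eval M) (h_eval S); apply: eq_bigr => d _; congr (_ * (_ * _)).
  apply: eq_bigr => i _; congr (_ ^+ _).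
  have := Hp _ (vbasis_mem (mem_tnth i B)).
  by rewrite mulmxBr linearB /= => /eqP; rewrite subr_eq0 => /eqP.
exists h; split; last first.
  move=> S HS Hh M HM Hp; case: (boolP (M \in unitmx)) => // HU.
  have D0 : \det M = 0 by move: HU; rewrite unitmxE unitfE negbK => /eqP.
  by move: Hh; rewrite -(Claim3 _ _ Hp) -(Claim2 _ D0) Claim1 // eqxx.
pose monoD (a : {ffun 'I_m -> 'I_T.+1}) : 'X_{1..m} := [multinom (a i : nat) | i < m].
pose p : U := \sum_(d : ({ffun 'I_m -> 'I_T.+1} * 'I_T.+1)%type | (j <= d.2)%N) (w d * 0 ^+ (d.2 - j)) *: 'X_[monoD d.1].
have p0 : p != 0.
  apply/eqP => /(congr1 (mcoeff (monoD a0))); rewrite mcoeff0 raddf_sum /=.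
  rewrite (bigD1 (a0, inord j)) /=; last by rewrite inordK.
  rewrite mcoeffZ mcoeffX eqxx mulr1 inordK // subnn expr0 mulr1 big1 ?addr0.
    by move/eqP; rewrite (negbTE Ha0).
  move=> d /andP [Hd Hne]; rewrite mcoeffZ mcoeffX.
  case: (eqVneq d.1 a0) => Ea.
    have Hd2 : (j < d.2)%N.
      rewrite ltn_neqAle Hd andbT; apply: contra Hne => /eqP Ej.
      apply/eqP; case: d Ea Ej {Hd} => [a k] /= -> Ej; congr (_, _).
      by apply/val_inj; rewrite /= inordK // Ej.
    by rewrite expr0n subn_eq0 leqNgt Hd2 /= mulr0 mul0r.
  have -> : (monoD d.1 == monoD a0) = false.
    apply/negbTE; apply: contra Ea => /eqP E; apply/eqP/ffunP => i; apply/val_inj.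
    by have := congr1 (fun mm : 'X_{1..m} => mm i) E; rewrite !mnmE.
  by rewrite mulr0.
have [y0 Hy0] := mpoly_nonroot p0.
have coord_lin : forall i, islin (coord B i).
  by move=> i a X Y; rewrite linearD linearZ.
pose S0 := \sum_i y0 i *: symrep (coord B i).
have S0sym : symm S0.
  rewrite /Defs.symmetric /S0 linear_sum /=; apply: eq_bigr => i _.
  by rewrite linearZ /= symrep_sym.
have trS0 : forall l, \tr (tnth B l *m S0) = y0 l.
  move=> l; rewrite mulmx_sumr raddf_sum (bigD1 l) //= big1 ?addr0.
    rewrite -scalemxAr linearZ /= symrep_tr //; last exact: HL (vbasis_mem (mem_tnth l B)).
    by rewrite (tnth_nth 0) coord_free ?eqxx ?mulr1 //; exact (basis_free (vbasisP L)).
  move=> i Hi; rewrite -scalemxAr linearZ /= symrep_tr //; last exact: HL (vbasis_mem (mem_tnth l B)).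
  rewrite (tnth_nth 0) coord_free; first by rewrite eq_sym (negbTE Hi) mulr0.
  exact (basis_free (vbasisP L)).
exists S0; split => //.
suff -> : mat_eval h S0 = p.@[y0] by [].
rewrite h_eval /p raddf_sum /=; apply: eq_bigr => d _.
rewrite mevalZ mevalX -mulrA; congr (_ * _); rewrite mulrC; congr (_ * _).
by apply: eq_bigr => i _; rewrite trS0 mnmE.
Qed.

End NonSing.

Section Final.
Variables (R : realType) (n c : nat).
Local Notation C := (R[i]).
Local Notation Mat := ('M[C]_n).



Lemma ML_iff_crit (L : {vspace Mat}) (A : c.-tuple Mat) (S : Mat) :
  sym_subspace L -> perp_basis L A -> symm S ->
  (forall M, reciprocal_variety L M -> in_perp L (M - S) -> M \in unitmx) ->
  forall M, (reciprocal_variety L M /\ in_perp L (M - S)) <-> critical_matrices A S M.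
Proof.
move=> HL [Hfree HA] HS Hns M; split.
  move=> [Hr Hp]; have HU := Hns M Hr Hp.
  have HY := closure_inv Hr HU.
  have /coord_span E := proj2 (HA _) Hp.
  have EA : affine_combo A S (fun k => coord A k (M - S)) = M.
    rewrite /affine_combo -[RHS](subrK S); congr (_ + _); rewrite [RHS]E.
    by apply: eq_bigr => j _; rewrite (tnth_nth 0).
  split => //; exists (fun k => coord A k (M - S)); split => //.
  move=> k; rewrite jacobi EA.
  rewrite adj_inv // -scalemxAr linearZ /= mxtrace_mulC.
  have [_ ->] := proj1 (HA (tnth A k)) (memv_span (mem_tnth k A)).
    by rewrite mulr0.
  exact: HY.
move=> [HU [t [EM Hc]]].
have HMS : M - S = \sum_(k < c) t k *: tnth A k by rewrite EM /affine_combo addrK.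
have Hp : in_perp L (M - S).
  apply: (proj1 (HA _)); rewrite HMS; apply: rpred_sum => k _; apply: rpredZ.
  exact: memv_span (mem_tnth k A).
split => //.
have HMs : symm M.
  have [H1 _] := Hp; rewrite -(subrK S M) /Defs.symmetric linearD /= H1.
  by rewrite (eqP (introT eqP HS)).
have HYs : symm (invmx M) by rewrite /Defs.symmetric trmx_inv HMs.
have HY : invmx M \in L.
  apply: (perp_perp HL (conj Hfree HA) HYs) => k.
  have := Hc k; rewrite jacobi -EM adj_inv // -scalemxAr linearZ /=.
  move/eqP; rewrite mulf_eq0 => /orP [D0|/eqP H].
    by move: HU; rewrite unitmxE unitfE D0.
  by rewrite mxtrace_mulC.
apply: sub_closure; exists (invmx M); split => //.
  by rewrite unitmx_inv.
by rewrite invmxK.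
Qed.

End Final.

Theorem proposition2p8 (R : realType) (n c : nat)
  (L : {vspace 'M[R[i]]_n}) (A : c.-tuple 'M[R[i]]_n) :
  sym_subspace L -> regular L -> perp_basis L A ->
  forall d : nat, ML_degree L d ->
  generic (fun S : 'M[R[i]]_n => has_card (critical_matrices A S) d).
Proof.
move=> HL _ HA d HML.
have G := generic_and HML (generic_nonsing HL).
apply: (generic_mono _ G) => S HS [[s [us sz Hs]] Hns].
exists s; split => // M; rewrite Hs; exact: ML_iff_crit.
Qed.
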